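(* In the standing setup, let $T$ be a valid partial table and let $T(i,b)=\emptyset$. Then either there exists a valid partial table $T'$ with strictly more nonempty positions than $T$, or there are at least $(n-|S_i|)(n-|C_b|)$ positions that are $(i,b)$-removable.
   Context: Standing setup: $M$ is a matroid of rank $n$ on ground set $E$; $f\le n$ is a positive integer; for each $i\in\{1,\dots,f\}$ and $j\in\{1,\dots,n\}$, $B_{i,j}$ is a basis of $M$, and the sets $B_{i,j}$ are pairwise disjoint. A valid partial table $T$ assigns to each position $(i,j)\in[f]\times[n]$ either the symbol $\emptyset$ (the position is empty) or an element $T(i,j)\in B_{i,j}$, such that for every row $i$ the set $S_i=\{T(i,j):T(i,j)\ne\emptyset\}$ is independent and for every column $j$ the set $C_j=\{T(i,j):T(i,j)\neq\emptyset\}$ is independent. Notation: for a set $A$ and an element $z$, ''$A+z$ is independent'' means $z\notin A$ and $A\cup\{z\}$ is independent; $A-z$ denotes $A\setminus\{z\}$ for $z\in A$; expressions such as $A-z+w$ are read left to right with the same convention. Definitions (with $T(i,b)=\emptyset$): an element $x\in B_{i,c}$ is $(i,b)$-addable if either (1) $T(i,c)=\emptyset$ and both $S_i+x$ and $C_c+x$ are independent, or (2) $T(i,c)=x'\neq\emptyset$ and there is $y\in B_{i,b}$ such that $C_b+y$ and $S_i-x'+y+x$ are independent. A position $(j,c)$ with $T(j,c)=y'\neq\emptyset$ is $(i,b)$-removable if there is an $(i,b)$-addable element $x\in B_{i,c}$ such that $C_c-y'+x$ is independent. *)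

(* Defs.v *)
From mathcomp Require Import all_boot.
Set Implicit Arguments. Unset Strict Implicit. Unset Printing Implicit Defensive.

Section Matroid.
Variable E : finType.
Variable indep : {set E} -> bool.

Definition matroid : Prop :=
  [/\ indep set0,
      (forall A B : {set E}, A \subset B -> indep B -> indep A) &
      (forall A B : {set E}, indep A -> indep B -> #|A| < #|B| ->
          exists2 x, x \in B :\: A & indep (x |: A))].

Definition matroid_rank (n : nat) : Prop :=
  (exists2 A, indep A & #|A| = n) /\ (forall A, indep A -> #|A| <= n).

Definition is_basis (B : {set E}) : Prop :=
  indep B /\ (forall x, x \notin B -> ~~ indep (x |: B)).

Definition addind (A : {set E}) (z : E) : bool :=
  (z \notin A) && indep (z |: A).

(* "A - w + z is independent" (w \in A): read left to right. *)
Definition swapind (A : {set E}) (w z : E) : bool :=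
  addind (A :\ w) z.

(* "A - w + y + x is independent", read left to right. *)
Definition swap2ind (A : {set E}) (w y x : E) : bool :=
  addind (A :\ w) y && addind (y |: (A :\ w)) x.

Variables f n : nat.
Variable B : 'I_f -> 'I_n -> {set E}.

(* A partial table: None is the empty symbol. *)
Definition table := 'I_f -> 'I_n -> option E.

Definition row_set (T : table) (i : 'I_f) : {set E} :=
  [set x | [exists j, T i j == Some x]].
Definition col_set (T : table) (j : 'I_n) : {set E} :=
  [set x | [exists i, T i j == Some x]].

Definition valid_table (T : table) : Prop :=
  [/\ (forall i j x, T i j = Some x -> x \in B i j),
      (forall i, indep (row_set T i)) &
      (forall j, indep (col_set T j))].

Definition num_filled (T : table) : nat :=
  #|[set p : 'I_f * 'I_n | T p.1 p.2 != None]|.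

Definition addable (T : table) (i : 'I_f) (b : 'I_n) (c : 'I_n) (x : E) : Prop :=
  x \in B i c /\
  match T i c with
  | None => addind (row_set T i) x /\ addind (col_set T c) x
  | Some x' => exists2 y, y \in B i b &
                 addind (col_set T b) y /\ swap2ind (row_set T i) x' y x
  end.

Definition removable (T : table) (i : 'I_f) (b : 'I_n) (j : 'I_f) (c : 'I_n) : Prop :=
  exists y', T j c = Some y' /\
    exists2 x, addable T i b c x & swapind (col_set T c) y' x.

End Matroid.

(* Main.v *)
Require Import Defs.
From mathcomp Require Import all_boot zify.
From Stdlib Require Import Classical ClassicalEpsilon.
Set Implicit Arguments. Unset Strict Implicit. Unset Printing Implicit Defensive.

Section MatLemmas.
Variable E : finType.
Variable indep : {set E} -> bool.
Hypothesis hM : matroid indep.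

Lemma indep_sub (A C : {set E}) : A \subset C -> indep C -> indep A.
Proof. by case: hM => _ h _; apply: h. Qed.

Lemma indep_aug (A C : {set E}) : indep A -> indep C -> #|A| < #|C| ->
  exists2 x, x \in C :\: A & indep (x |: A).
Proof. by case: hM => _ _ h; apply: h. Qed.

Lemma indep_ext (I : {set E}) : indep I -> forall k (J : {set E}), #|I| - #|J| = k -> indep J -> #|J| <= #|I| ->
  exists J' : {set E}, [/\ J \subset J', J' \subset J :|: I, indep J' & #|J'| = #|I|].
Proof.
move=> hI; elim=> [|k IH] J hk hJ hle.
  exists J; split => //; first exact: subsetUl.
  by apply/eqP; rewrite eqn_leq hle /=; move/eqP: hk; rewrite subn_eq0.
have hlt : #|J| < #|I| by rewrite -subn_gt0 hk.
have [x /setDP [xI xJ] hxJ] := indep_aug hJ hI hlt.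
have [||J' [s1 s2 s3 s4]] := IH (x |: J) _ hxJ.
- by rewrite cardsU1 xJ add1n subnS hk.
- by rewrite cardsU1 xJ add1n.
exists J'; split => //.
- by apply: subset_trans s1; apply: subsetUr.
- apply: (subset_trans s2); apply/subsetP => z; rewrite !inE.
  by case/orP => [/orP[/eqP->|->]|->]; rewrite ?xI ?orbT.
Qed.

Lemma indep_ext' (I J : {set E}) : indep I -> indep J -> #|J| <= #|I| ->
  exists J' : {set E}, [/\ J \subset J', J' \subset J :|: I, indep J' & #|J'| = #|I|].
Proof. by move=> hI hJ; apply: (indep_ext hI (erefl _) hJ). Qed.

Lemma count_G (J Bs : {set E}) : indep J -> indep Bs ->
  #|Bs| - #|J| <= #|[set x in Bs | (x \notin J) && indep (x |: J)]|.
Proof.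
move=> hJ hB.
case: (leqP #|J| #|Bs|) => hle; last by rewrite (eqP (ltnW _)) ?subn_eq0 // ltnW.
have [J' [s1 s2 s3 s4]] := indep_ext' hB hJ hle.
have -> : #|Bs| - #|J| = #|J' :\: J|.
  by rewrite -s4 -(cardsID J J') (setIidPr s1) addKn.
apply: subset_leq_card; apply/subsetP => z; rewrite !inE => /andP [zJ zJ'].
rewrite zJ /=; apply/andP; split.
  by move/subsetP: s2 => /(_ z zJ'); rewrite inE (negbTE zJ).
apply: indep_sub s3; apply/subsetP => w; rewrite !inE => /orP [/eqP->//|].
by move/subsetP: s1; apply.
Qed.

Lemma count_L (I X : {set E}) : indep I -> indep X ->
  (forall x, x \in X -> (x \notin I) && ~~ indep (x |: I)) ->
  #|X| <= #|[set d in I | [exists x in X, (x \notin I :\ d) && indep (x |: (I :\ d))]]|.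
Proof.
move=> hI hX hXI; set K := [set d in I | _].
rewrite leqNgt; apply/negP => hlt.
have hKI : K \subset I by apply/subsetP => z; rewrite inE => /andP[].
have [x /setDP [xX xK] hxK] := indep_aug (indep_sub hKI hI) hX hlt.
have /andP [xI xdep] := hXI x xX.
have hKlt : #|K| < #|I|.
  rewrite ltn_neqAle subset_leq_card // andbT; apply/negP => /eqP e.
  have KI : K = I by apply/eqP; rewrite eqEcard hKI e leqnn.
  by move: xdep; rewrite -KI hxK.
have [|J' [s1 s2 s3 s4]] := indep_ext' hI hxK.
  by rewrite cardsU1 xK.
have xJ' : x \in J' by move/subsetP: s1; apply; rewrite !inE eqxx.
have hJ'sub : J' \subset x |: (I :&: J').
  apply/subsetP => z zJ; rewrite !inE zJ andbT.
  move/subsetP: s2 => /(_ z zJ); rewrite in_setU in_setU1 => /orP[/orP[->//|zK]|->]; last by rewrite orbT.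
  by move/subsetP: hKI => /(_ z zK) ->; rewrite orbT.
have c1 := subset_leq_card hJ'sub.
rewrite cardsU1 s4 in c1.
have c2 := cardsID J' I.
have hIJ : #|I :\: J'| <= 1.
  have b1 := leq_b1 (x \notin I :&: J').
  move: c1 c2 b1; set a := #|I :&: J'|; set b := #|I :\: J'|; set bb := nat_of_bool _.
  move=> c1 c2 b1; rewrite -c2 in c1; clear -c1 b1; lia.
have /card_gt0P [d dIJ] : 0 < #|I :\: J'|.
  have : #|I :&: J'| < #|I|.
    rewrite (cardsD1 x J') in s4.
    have : I :&: J' \subset J' :\ x.
      apply/subsetP => z; rewrite !inE => /andP [zI ->]; rewrite andbT.
      by apply/negP => /eqP ez; rewrite -ez zI in xI.
    move/subset_leq_card; rewrite xJ' in s4.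
    move: s4; set a := #|I :&: J'|; set b := #|J' :\ x|; set c := #|I|. move=> s4 h; clear -s4 h; lia.
  move: c2; set a := #|I :&: J'|; set b := #|I :\: J'|; set c := #|I|. move=> c2 h; clear -c2 h; lia.
have [dI dJ'] : d \in I /\ d \notin J' by move: dIJ; rewrite inE => /andP[].
have dK : d \in K.
  rewrite inE dI /=; apply/existsP; exists x; rewrite xX /=; apply/andP; split.
    by rewrite inE negb_and xI orbT.
  apply: indep_sub s3; apply/subsetP => z; rewrite !inE => /orP [/eqP->//|/andP [zd zI]].
  apply/negPn/negP => zJ.
  have : z \in I :\: J' by rewrite inE zI zJ.
  move/card_le1_eqP: hIJ => h /(h _ _ dIJ) ed.
  by rewrite ed eqxx in zd.
by move/subsetP: s1 => /(_ d); rewrite inE dK orbT => /(_ isT); rewrite (negbTE dJ').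
Qed.

End MatLemmas.

Definition pb (P : Prop) : bool := if excluded_middle_informative P then true else false.
Lemma pbP (P : Prop) : pb P -> P.
Proof. by rewrite /pb; case: excluded_middle_informative. Qed.
Lemma pbT (P : Prop) : P -> pb P.
Proof. by rewrite /pb; case: excluded_middle_informative. Qed.

Section Main.
Variable E : finType.
Variable indep : {set E} -> bool.
Variables n f : nat.
Variable B : 'I_f -> 'I_n -> {set E}.
Hypothesis hM : matroid indep.
Hypothesis hrank : matroid_rank indep n.
Hypothesis hB : forall i j, is_basis indep (B i j).
Hypothesis hdisj : forall (p q : 'I_f * 'I_n), p != q -> [disjoint B p.1 p.2 & B q.1 q.2].

Lemma basis_card i j : #|B i j| = n.
Proof.
case: (hB i j) => hb hmax; case: hrank => [[A hA cA] hle].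
apply/eqP; rewrite eqn_leq hle //=; rewrite leqNgt; apply/negP => lt.
have lt' : #|B i j| < #|A| by rewrite cA.
have [x /setDP [xA xB] hx] := indep_aug hM hb hA lt'.
by move: (hmax x xB); rewrite hx.
Qed.

Lemma uniq_pos z j c j' c' : z \in B j c -> z \in B j' c' -> j = j' /\ c = c'.
Proof.
move=> h1 h2; case: (eqVneq (j, c) (j', c')) => [[-> ->]//|ne].
by have := disjointFr (hdisj ne) h1; rewrite /= h2.
Qed.

Lemma row_sub (T : table E f n) j (A : {set E}) :
  (forall c w, T j c = Some w -> w \in A) -> row_set T j \subset A.
Proof.
move=> h; apply/subsetP => w; rewrite inE => /existsP [c /eqP e]; exact: h e.
Qed.

Lemma col_sub (T : table E f n) c (A : {set E}) :
  (forall j w, T j c = Some w -> w \in A) -> col_set T c \subset A.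
Proof.
move=> h; apply/subsetP => w; rewrite inE => /existsP [j /eqP e]; exact: h e.
Qed.

Lemma in_row (T : table E f n) j c w : T j c = Some w -> w \in row_set T j.
Proof. by move=> e; rewrite inE; apply/existsP; exists c; rewrite e. Qed.
Lemma in_col (T : table E f n) j c w : T j c = Some w -> w \in col_set T c.
Proof. by move=> e; rewrite inE; apply/existsP; exists j; rewrite e. Qed.

Lemma filled_lt (T T' : table E f n) i b :
  (forall j c, T j c != None -> T' j c != None) -> T i b = None -> T' i b != None ->
  num_filled T < num_filled T'.
Proof.
move=> hsub hn hn'; apply: proper_card; apply/properP; split.
  by apply/subsetP => p; rewrite !inE; apply: hsub.
by exists (i, b); rewrite !inE //= hn.
Qed.


Variables (T : table E f n) (i : 'I_f) (b : 'I_n).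
Hypothesis hT : valid_table indep B T.
Hypothesis hib : T i b = None.
Hypothesis H : ~ (exists2 T' : table E f n, valid_table indep B T' & num_filled T < num_filled T').

Lemma noaug1 y : y \in B i b -> addind indep (col_set T b) y -> ~~ indep (y |: row_set T i).
Proof.
move=> yB /andP [yC yCi]; apply/negP => yS; apply: H.
pose T1 : table E f n := fun j c => if (j == i) && (c == b) then Some y else T j c.
case: hT => hE hR hC.
exists T1; last first.
  apply: (filled_lt (i:=i) (b:=b)) => //; last by rewrite /T1 !eqxx.
  by move=> j c; rewrite /T1; case: ifP.
split.
- move=> j c x; rewrite /T1; case: ifP => [/andP [/eqP -> /eqP ->] [<-] //|_]; exact: hE.
- move=> j; case: (eqVneq j i) => [->|ne].
    apply: (indep_sub hM _ yS); apply: row_sub => c w; rewrite /T1 eqxx /=.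
    case: ifP => [_ [<-]|_ e]; first by rewrite !inE eqxx.
    by rewrite inE (in_row e) orbT.
  apply: (indep_sub hM) _ (hR j); apply: row_sub => c w; rewrite /T1 (negbTE ne) /=; exact: in_row.
- move=> c; case: (eqVneq c b) => [->|ne].
    apply: (indep_sub hM) _ yCi; apply: col_sub => j w; rewrite /T1 eqxx andbT.
    case: ifP => [_ [<-]|_ e]; first by rewrite !inE eqxx.
    by rewrite inE (in_col e) orbT.
  apply: (indep_sub hM) _ (hC c); apply: col_sub => j w; rewrite /T1 (negbTE ne) andbF; exact: in_col.
Qed.

Lemma noaug2 c0 x' y x : T i c0 = Some x' -> y \in B i b -> addind indep (col_set T b) y ->
  x \in B i c0 -> addind indep (y |: (row_set T i :\ x')) x -> ~~ indep (x |: col_set T c0).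
Proof.
move=> hic yB /andP [yC yCi] xB /andP [_ xJ]; apply/negP => xC; apply: H.
have nb : c0 != b by apply/negP => /eqP e; rewrite e hib in hic.
pose T2 : table E f n := fun j c => if j == i then
   (if c == b then Some y else if c == c0 then Some x else T j c) else T j c.
case: hT => hE hR hC.
exists T2; last first.
  apply: (filled_lt (i:=i) (b:=b)) => //; last by rewrite /T2 !eqxx.
  move=> j c; rewrite /T2; case: ifP => // /eqP ->; case: ifP => // _; case: ifP => //.
split.
- move=> j c w; rewrite /T2; case: ifP => [/eqP ->|_]; last exact: hE.
  case: ifP => [/eqP -> [<-] //|_]; case: ifP => [/eqP -> [<-] //|_]; exact: hE.
- move=> j; case: (eqVneq j i) => [->|ne].
    apply: (indep_sub hM) _ xJ; apply: row_sub => c w; rewrite /T2 eqxx.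
    case: ifP => [_ [<-]|_]; first by rewrite !inE eqxx orbT.
    case: ifP => [_ [<-]|nc e]; first by rewrite !inE eqxx.
    rewrite !in_setU1 in_setD1 (in_row e) andbT; apply/orP; right; apply/orP; right.
    apply/negP => /eqP ew; rewrite ew in e.
    have [_ ec] := uniq_pos (hE _ _ _ e) (hE _ _ _ hic).
    by rewrite ec eqxx in nc.
  apply: (indep_sub hM) _ (hR j); apply: row_sub => c w; rewrite /T2 (negbTE ne) /=; exact: in_row.
- move=> c; case: (eqVneq c b) => [->|ne].
    apply: (indep_sub hM) _ yCi; apply: col_sub => j w; rewrite /T2 eqxx.
    case: ifP => [_ [<-]|_ e]; first by rewrite !inE eqxx.
    by rewrite inE (in_col e) orbT.
  case: (eqVneq c c0) => [->|ne0].
    apply: (indep_sub hM) _ xC; apply: col_sub => j w; rewrite /T2 eqxx (negbTE nb).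
    case: ifP => [_ [<-]|_ e]; first by rewrite !inE eqxx.
    by rewrite inE (in_col e) orbT.
  apply: (indep_sub hM) _ (hC c); apply: col_sub => j w; rewrite /T2 (negbTE ne) (negbTE ne0).
  case: ifP => _; exact: in_col.
Qed.

Lemma noaug3 c0 x' y x : T i c0 = Some x' -> y \in B i b -> addind indep (col_set T b) y ->
  x \in B i c0 -> addind indep (y |: (row_set T i :\ x')) x -> x \notin col_set T c0.
Proof.
move=> hic yB yC xB /andP [_ xJ]; apply/negP; rewrite inE => /existsP [j /eqP e].
case: hT => hE _ _.
have [ej _] := uniq_pos (hE _ _ _ e) xB.
rewrite ej hic in e; case: e => ex; rewrite -ex in xJ.
have x'S : x' \in row_set T i := in_row hic.
have eS : x' |: (y |: (row_set T i :\ x')) = y |: row_set T i.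
  apply/setP => z; rewrite !in_setU1 in_setD1; case: (eqVneq z x') => [->|_] /=; by rewrite ?x'S ?orbT.
by move: (noaug1 yB yC); rewrite -eS xJ.
Qed.


Definition Rset : {set 'I_f * 'I_n} :=
  [set p : 'I_f * 'I_n | pb (removable indep B T i b p.1 p.2)].

Lemma ccol (x0 : E) c x' y : T i c = Some x' -> y \in B i b -> addind indep (col_set T b) y ->
  addind indep (row_set T i :\ x') y ->
  n - #|row_set T i| <= #|[set p in Rset | p.2 == c]|.
Proof.
move=> hic yB yC /andP [yS' yJ].
case: hT => hE hR hC.
set S := row_set T i.
have x'S : x' \in S := in_row hic.
pose J := y |: (S :\ x').
pose X := [set x in B i c | (x \notin J) && indep (x |: J)].
have cJ : #|J| = #|S| by rewrite /J cardsU1 yS' (cardsD1 x' S) x'S.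
have cX : n - #|S| <= #|X|.
  by rewrite -cJ -(basis_card i c); apply: count_G => //; case: (hB i c).
have indX : indep X.
  by apply: (indep_sub hM) (proj1 (hB i c)); apply/subsetP => z; rewrite inE => /andP[].
have hXC : forall x, x \in X -> (x \notin col_set T c) && ~~ indep (x |: col_set T c).
  move=> x; rewrite inE => /andP [xB xJ].
  by rewrite (noaug3 hic yB yC xB xJ) (noaug2 hic yB yC xB xJ).
set Cc := col_set T c.
pose D := [set d in Cc | [exists x in X, (x \notin Cc :\ d) && indep (x |: (Cc :\ d))]].
have cD : #|X| <= #|D| := count_L hM (hC c) indX hXC.
apply: (leq_trans cX); apply: (leq_trans cD).
apply: (leq_trans _ (leq_imset_card (fun p : 'I_f * 'I_n => odflt x0 (T p.1 p.2)) _)).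
apply: subset_leq_card; apply/subsetP => d; rewrite inE => /andP [dC /existsP [x /andP [xX xd]]].
move: (dC); rewrite inE => /existsP [j /eqP e].
apply/imsetP; exists (j, c); last by rewrite /= e.
rewrite !inE eqxx andbT; apply: pbT => /=.
exists d; split => //; exists x => //.
move: xX; rewrite inE => /andP [xB xJ].
split => //; rewrite hic; exists y => //; split => //.
by rewrite /swap2ind /addind yS' yJ.
Qed.


Lemma count_main : exists R : {set 'I_f * 'I_n},
     (n - #|row_set T i|) * (n - #|col_set T b|) <= #|R| /\
     (forall p, p \in R -> removable indep B T i b p.1 p.2).
Proof.
exists Rset; split; last by move=> p; rewrite inE => /pbP.
case: hT => hE hR hC.
set S := row_set T i; set Cb := col_set T b.
have /card_gt0P [x0 _] : 0 < #|B i b|.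
  by rewrite basis_card (leq_ltn_trans (leq0n b) (ltn_ord b)).
pose Y := [set y in B i b | (y \notin Cb) && indep (y |: Cb)].
have cY : n - #|Cb| <= #|Y|.
  by rewrite -(basis_card i b); apply: count_G => //; [exact: hC | exact: (proj1 (hB i b))].
have indY : indep Y.
  by apply: (indep_sub hM) (proj1 (hB i b)); apply/subsetP => z; rewrite inE => /andP[].
have hYS : forall y, y \in Y -> (y \notin S) && ~~ indep (y |: S).
  move=> y; rewrite inE => /andP [yB yC]; rewrite (noaug1 yB yC) andbT.
  apply/negP; rewrite inE => /existsP [c /eqP e].
  have [_ ec] := uniq_pos yB (hE _ _ _ e).
  by rewrite -ec hib in e.
pose A := [set d in S | [exists y in Y, (y \notin S :\ d) && indep (y |: (S :\ d))]].
have cA : #|Y| <= #|A| := count_L hM (hR i) indY hYS.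
pose Cols := [set c | [exists x' in A, T i c == Some x']].
have cCols : #|A| <= #|Cols|.
  apply: (leq_trans _ (leq_imset_card (fun c => odflt x0 (T i c)) Cols)).
  apply: subset_leq_card; apply/subsetP => d dA.
  have : d \in S by move: dA; rewrite inE => /andP[].
  rewrite inE => /existsP [c /eqP e].
  apply/imsetP; exists c; last by rewrite e.
  by rewrite inE; apply/existsP; exists d; rewrite dA e eqxx.
have hcol : forall c, c \in Cols -> n - #|S| <= #|[set p in Rset | p.2 == c]|.
  move=> c; rewrite inE => /existsP [x' /andP [x'A /eqP hic]].
  move: x'A; rewrite inE => /andP [_ /existsP [y /andP [yY hy]]].
  move: yY; rewrite inE => /andP [yB yC].
  exact: (ccol x0 hic yB yC hy).
have sumR : #|Rset| = \sum_(c : 'I_n) #|[set p in Rset | p.2 == c]|.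
  rewrite -sum1_card (partition_big (fun p : 'I_f * 'I_n => p.2) predT) //=.
  by apply: eq_bigr => c _; rewrite sum1dep_card.
rewrite sumR.
apply: (@leq_trans (\sum_(c in Cols) #|[set p in Rset | p.2 == c]|)); last first.
  rewrite [X in _ <= X](bigID (fun c => c \in Cols)) /=; exact: leq_addr.
apply: (@leq_trans (\sum_(c in Cols) (n - #|S|))); last by apply: leq_sum.
rewrite sum_nat_const mulnC; apply: leq_mul => //.
exact: leq_trans cY (leq_trans cA cCols).
Qed.

End Main.

Theorem mainTheorem6 (E : finType) (indep : {set E} -> bool) (n f : nat)
  (B : 'I_f -> 'I_n -> {set E})
  (hM : matroid indep) (hrank : matroid_rank indep n)
  (hf0 : 0 < f) (hfn : f <= n)
  (hB : forall i j, is_basis indep (B i j))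
  (hdisj : forall (p q : 'I_f * 'I_n), p != q -> [disjoint B p.1 p.2 & B q.1 q.2])
  (T : table E f n) (hT : valid_table indep B T)
  (i : 'I_f) (b : 'I_n) (hib : T i b = None) :
  (exists2 T' : table E f n, valid_table indep B T' & num_filled T < num_filled T')
  \/
  (exists R : {set 'I_f * 'I_n},
     (n - #|row_set T i|) * (n - #|col_set T b|) <= #|R| /\
     (forall p, p \in R -> removable indep B T i b p.1 p.2)).
Proof.
case: (classic (exists2 T' : table E f n, valid_table indep B T' & num_filled T < num_filled T')) => [h|h].
  by left.
by right; apply: (count_main hM hrank hB hdisj hT hib h).
Qed.
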